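(* Let $(\mathcal{X},d)$ be a finite metric space, $P$ a probability distribution on $\mathcal{X}$, $k\ge1$ an integer, and $O\in\mathcal{X}_k$ an optimal $k$-RP solution. Then there exists a $k$-multiset $S$ that is returned with positive probability by the variance-reduced distribution $\widetilde{P}_k$ such that $\mathbb{E}_{X\sim P_k}[d_k(S,X)]\le 4\cdot \mathbb{E}_{X\sim P_k}[d_k(O,X)]$.
   Context: $\mathcal{X}_k$ is the set of multisets of exactly $k$ points of $\mathcal{X}$. For $U,V\in\mathcal{X}_k$, $d_k(U,V)$ is the minimum, over perfect matchings between the $k$ elements of $U$ and the $k$ elements of $V$ (with multiplicity), of the sum of the distances of matched pairs. $P_k$ is the distribution of the multiset of $k$ points drawn i.i.d. from $P$. The $k$-RP cost of $S$ is $\mathbb{E}_{X\sim P_k}[d_k(S,X)]$, and $O$ minimizes it. The distribution $\widetilde{P}_k$ on $\mathcal{X}_k$: for each $x\in\mathcal{X}$ the multiset contains $\lfloor P(x)k\rfloor$ copies of $x$; each of the remaining $r=k-\sum_{x}\lfloor P(x)k\rfloor$ points (if $r>0$) is chosen independently, equal to $x$ with probability $\frac{P(x)-\lfloor P(x)k\rfloor/k}{\sum_{y\in\mathcal{X}}(P(y)-\lfloor P(y)k\rfloor/k)}$. *)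

(* Defs.v *)
From HB Require Import structures.
From mathcomp Require Import all_boot all_order all_algebra.
From mathcomp Require Import perm.
From mathcomp Require Import all_reals.
Set Implicit Arguments. Unset Strict Implicit. Unset Printing Implicit Defensive.
Import Order.TTheory GRing.Theory Num.Theory.
Local Open Scope ring_scope.

(* A k-multiset of points of T is represented by a k-tuple (an ordered listing
   of its elements with multiplicity); all quantities below are invariant under
   reordering of the tuple. *)

Definition is_metric (T : finType) (R : realType) (d : T -> T -> R) : Prop :=
  [/\ forall x y, 0 <= d x y,
      forall x y, d x y = 0 <-> x = y,
      forall x y, d x y = d y x &
      forall x y z, d x z <= d x y + d y z].

Definition is_distr (T : finType) (R : realType) (P : T -> R) : Prop :=
  (forall x, 0 <= P x) /\ \sum_(x : T) P x = 1.

(* The identity permutation's cost is used as the seed of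
   the iterated min (it is itself one of the matchings). *)
Definition dk (T : finType) (R : realType) (d : T -> T -> R) (k : nat)
    (U V : k.-tuple T) : R :=
  \big[Order.min/(\sum_(i < k) d (tnth U i) (tnth V i))]_(s : 'S_k)
     \sum_(i < k) d (tnth U i) (tnth V (s i)).

Definition kRP_cost (T : finType) (R : realType) (d : T -> T -> R)
    (P : T -> R) (k : nat) (S : k.-tuple T) : R :=
  \sum_(X : k.-tuple T) (\prod_(i < k) P (tnth X i)) * dk d S X.

Definition fl (T : finType) (R : realType) (P : T -> R) (k : nat) (x : T) : nat :=
  Num.truncn (P x * k%:R).

(* deterministic part of the variance-reduced sample *)
Definition fixed_part (T : finType) (R : realType) (P : T -> R) (k : nat) : seq T :=
  flatten [seq nseq (fl P k x) x | x <- enum T].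

Definition rem_count (T : finType) (R : realType) (P : T -> R) (k : nat) : nat :=
  (k - size (fixed_part P k))%N.

(* distribution of each of the r remaining points *)
Definition resid (T : finType) (R : realType) (P : T -> R) (k : nat) (x : T) : R :=
  P x - (fl P k x)%:R / k%:R.

Definition resid_prob (T : finType) (R : realType) (P : T -> R) (k : nat) (x : T) : R :=
  resid P k x / \sum_(y : T) resid P k y.

Definition Ptilde (T : finType) (R : realType) (P : T -> R) (k : nat)
    (S : k.-tuple T) : R :=
  \sum_(e : (rem_count P k).-tuple T)
     (\prod_(j < rem_count P k) resid_prob P k (tnth e j)) *
     (perm_eq (fixed_part P k ++ e) S)%:R.

(* Main.v *)
Require Import Defs.
From HB Require Import structures.
From mathcomp Require Import all_boot all_order all_algebra.
From mathcomp Require Import perm.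
From mathcomp Require Import all_reals.
From mathcomp Require Import zify ring lra.
Import Order.TTheory GRing.Theory Num.Theory.
Local Open Scope ring_scope.
Set Implicit Arguments. Unset Strict Implicit. Unset Printing Implicit Defensive.
Section Round.
Variables (R : realType) (I T : finType).
Variables (w : I -> T -> R) (lo hi : T -> nat).

Definition colsum (q : I -> T -> R) y := \sum_(i : I) q i y.
Definition feas (q : I -> T -> R) :=
  [/\ forall i y, 0 <= q i y, forall i, \sum_(y : T) q i y = 1 &
      forall y, (lo y)%:R <= colsum q y <= (hi y)%:R].
Definition fracb (q : I -> T -> R) (e : I * T) := (0 < q e.1 e.2 < 1).
Definition ntb (q : I -> T -> R) y := ((lo y)%:R < colsum q y < (hi y)%:R).
Definition meas q := (#|[set e | fracb q e]| + #|[set y | ntb q y]|)%N.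
Definition cst q := \sum_(i : I) \sum_(y : T) q i y * w i y.
Definition cnt (f : I -> T) y := (\sum_(i : I) (f i == y))%N.

Lemma feas_le1 q i y : feas q -> q i y <= 1.
Proof.
case=> q0 q1 _; rewrite -(q1 i) (bigD1 y) //= lerDl.
by apply: sumr_ge0 => z _.
Qed.

Lemma nfrac01 q i y : feas q -> ~~ fracb q (i, y) -> q i y = (q i y == 1)%:R.
Proof.
move=> Fq; rewrite /fracb /= => nf.
have h0 := (match Fq with And3 a _ _ => a end) i y.
have h1 := feas_le1 i y Fq.
have [->|ne] := eqVneq (q i y) 1; first by [].
move: nf; rewrite negb_and -!leNgt => /orP[qle|qge].
  by have -> : q i y = 0 by apply/le_anti; rewrite qle h0.
have e1 : q i y = 1 by apply/le_anti; rewrite qge h1.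
by rewrite e1 eqxx in ne.
Qed.

Lemma base q : feas q -> (forall e, ~~ fracb q e) ->
  exists f : I -> T, (forall y, lo y <= cnt f y <= hi y)%N /\
     \sum_(i : I) w i (f i) <= cst q.
Proof.
move=> Fq nf; have [q0 q1 qc] := Fq.
have ex i : exists y, q i y == 1.
  case: (boolP [exists y, q i y == 1]) => [/existsP//|/existsPn H]; exfalso.
  move: (q1 i); rewrite (eq_bigr (fun _ => 0)) ?big1 // => [/esym/eqP|y _].
    by rewrite oner_eq0.
  by rewrite (nfrac01 Fq (nf (i, y))) (negbTE (H y)).
pose f i := xchoose (ex i).
have qf i y : q i y = (f i == y)%:R.
  have fi : q i (f i) = 1 := eqP (xchooseP (ex i)).
  have [<-|ne] := eqVneq (f i) y; first by rewrite fi.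
  have : \sum_(z | z != f i) q i z = 0.
    by move: (q1 i); rewrite (bigD1 (f i)) //= fi; rewrite -{2}(addr0 1) => /addrI.
  move/psumr_eq0P => /(_ (fun z _ => q0 i z)) -> //.
  by rewrite eq_sym.
have cs y : colsum q y = (cnt f y)%:R.
  by rewrite /colsum /cnt natr_sum; apply: eq_bigr => i _; rewrite qf.
exists f; split.
  by move=> y; have := qc y; rewrite cs !ler_nat.
rewrite /cst; apply: ler_sum => i _.
rewrite (bigD1 (f i)) //= qf eqxx mul1r big1 ?addr0 // => y ne.
by rewrite qf eq_sym (negbTE ne) mul0r.
Qed.

Lemma kernel_gen (E : {set I * T}) (RC : {set I}) (Cc : {set T}) :
  (#|RC| + #|Cc| < #|E|)%N ->
  exists v : I * T -> R, [/\ exists e, v e != 0,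
     forall e, e \notin E -> v e = 0,
     forall i, i \in RC -> \sum_(y : T) v (i, y) = 0 &
     forall y, y \in Cc -> \sum_(i : I) v (i, y) = 0].
Proof.
move=> hcard.
have [e0 e0E] : exists e0, e0 \in E.
  by apply/set0Pn; apply: contraTneq hcard => ->; rewrite cards0.
pose A1 : 'M[R]_(#|E|, #|RC|) :=
  \matrix_(a, b) ((enum_val a).1 == enum_val b)%:R.
pose A2 : 'M[R]_(#|E|, #|Cc|) :=
  \matrix_(a, b) ((enum_val a).2 == enum_val b)%:R.
pose A := row_mx A1 A2.
have rk : (0 < \rank (kermx A))%N.
  rewrite mxrank_ker subn_gt0; apply: leq_ltn_trans hcard.
  exact: rank_leq_col.
have /existsP[r /existsP[a ra]] : [exists r, [exists a, kermx A r a != 0]].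
  apply: contraLR rk => /existsPn H; rewrite -leqNgt leqn0 mxrank_eq0.
  apply/eqP; apply/matrixP => i j; rewrite [RHS]mxE.
  by move: (H i) => /existsPn /(_ j) /negPn /eqP.
pose u := row r (kermx A).
have uA : u *m A = 0 by rewrite /u -row_mul mulmx_ker row0.
move: uA; rewrite mul_mx_row => /eqP; rewrite row_mx_eq0 => /andP[/eqP u1 /eqP u2].
pose v e := if e \in E then u 0 (enum_rank_in e0E e) else 0.
have sumE (F : I * T -> R) :
    \sum_(a < #|E|) u 0 a * F (enum_val a) = \sum_(e : I * T) v e * F e.
  rewrite [RHS](bigID (mem E)) /= [X in _ + X]big1 ?addr0; last first.
    by move=> e /negbTE eE; rewrite /v eE mul0r.
  rewrite [RHS]big_enum_val; apply: eq_bigr => b _.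
  by rewrite /v enum_valP enum_valK_in.
have pe (G : I * T -> R) : \sum_(e : I * T) G e = \sum_(i : I) \sum_(y : T) G (i, y).
  by rewrite pair_big; apply: eq_bigr => -[].
exists v; split.
- exists (enum_val a); rewrite /v enum_valP enum_valK_in.
  by rewrite /u mxE.
- by move=> e /negbTE eE; rewrite /v eE.
- move=> i iR; have := congr1 (fun M : 'M[R]_(1, #|RC|) => M 0 (enum_rank_in iR i)) u1.
  rewrite [X in X = _]mxE [RHS]mxE.
  under eq_bigr => b _ do rewrite [A1 _ _]mxE enum_rankK_in //.
  move=> h; rewrite -[RHS]h (sumE (fun e => (e.1 == i)%:R)) pe (bigD1 i) //= [X in _ = _ + X]big1 ?addr0.
    by apply: eq_bigr => y _; rewrite eqxx mulr1.
  by move=> i' ne; rewrite big1 // => y _; rewrite (negbTE ne) mulr0.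
- move=> y yC; have := congr1 (fun M : 'M[R]_(1, #|Cc|) => M 0 (enum_rank_in yC y)) u2.
  rewrite [X in X = _]mxE [RHS]mxE.
  under eq_bigr => b _ do rewrite [A2 _ _]mxE enum_rankK_in //.
  move=> h; rewrite -[RHS]h (sumE (fun e => (e.2 == y)%:R)) pe exchange_big (bigD1 y) //= [X in _ = _ + X]big1 ?addr0.
    by apply: eq_bigr => i _; rewrite eqxx mulr1.
  by move=> y' ne; rewrite big1 // => i _; rewrite (negbTE ne) mulr0.
Qed.

Lemma frac01 (x : R) : 0 <= x <= 1 -> ~~ (0 < x < 1) -> x = (x == 1)%:R.
Proof.
case/andP=> h0 h1 nf.
have [->|ne] := eqVneq x 1; first by [].
move: nf; rewrite negb_and -!leNgt => /orP[qle|qge].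
  by have -> : x = 0 by apply/le_anti; rewrite qle h0.
have e1 : x = 1 by apply/le_anti; rewrite qge h1.
by rewrite e1 eqxx in ne.
Qed.

Lemma one_frac (J : finType) (g : J -> R) (N : nat) j0 :
  (forall j, 0 <= g j <= 1) -> \sum_j g j = N%:R -> 0 < g j0 < 1 ->
  exists2 j, j != j0 & 0 < g j < 1.
Proof.
move=> g01 gs gj0.
case: (boolP [exists j, (j != j0) && (0 < g j < 1)]) => [/existsP[j /andP[]] | /existsPn H].
  by exists j.
exfalso.
have gi j : j != j0 -> g j = (g j == 1)%:R.
  move=> ne; apply: frac01 => //; move: (H j); by rewrite ne.
have hM : g j0 + (\sum_(j | j != j0) nat_of_bool (g j == 1%R))%:R = N%:R.
  rewrite natr_sum -gs [RHS](bigD1 j0) //=; congr (_ + _).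
  by apply: eq_bigr => j ne; rewrite -gi.
move: hM; set M := (\sum_(j | j != j0) _)%N => hM.
case/andP: gj0 => g0 g1.
have MN : (M < N)%N by rewrite -(ltr_nat R) -hM ltrDr.
have : g j0 = (N - M)%:R by rewrite natrB ?(ltnW MN) // -hM addrK.
move=> eg; move: g0 g1; rewrite eg ltr0n (_ : (1:R) = 1%:R) // ltr_nat.
by case: (N - M)%N => [|[]].
Qed.

Definition rdeg q i := (\sum_(y : T) nat_of_bool (fracb q (i, y)))%N.
Definition cdeg q y := (\sum_(i : I) nat_of_bool (fracb q (i, y)))%N.

Lemma sum_bool_ex (J : finType) (b : pred J) :
  (\sum_j nat_of_bool (b j))%N != 0%N -> exists j, b j.
Proof.
case: (boolP [exists j, b j]) => [/existsP//|/existsPn H].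
by rewrite big1 // => j _; rewrite (negbTE (H j)).
Qed.

Lemma sum_bool_ge2 (J : finType) (b : pred J) j0 j1 :
  j1 != j0 -> b j0 -> b j1 -> (2 <= \sum_j nat_of_bool (b j))%N.
Proof.
move=> ne b0 b1; rewrite (bigD1 j0) //= (bigD1 j1) //= b0 b1.
by rewrite addnA leq_addr.
Qed.

Lemma sum_sub_le (J : finType) (A : {set J}) (f : J -> nat) j1 :
  j1 \notin A -> (\sum_(j in A) f j + f j1 <= \sum_j f j)%N.
Proof.
move=> nA; rewrite [X in (_ <= X)%N](bigD1 j1) //= addnC leq_add2l.
rewrite [X in (_ <= X)%N]big_mkcond [X in (X <= _)%N]big_mkcond /=.
apply: leq_sum => j _; case: (boolP (j \in A)) => jA //.
by have -> : j != j1 by apply: contraNneq nA => <-.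
Qed.

Lemma two_card_le (J : finType) (A : {set J}) (f : J -> nat) :
  (forall j, j \in A -> 2 <= f j)%N -> (2 * #|A| <= \sum_(j in A) f j)%N.
Proof.
move=> H; rewrite mulnC -sum_nat_const; exact: leq_sum.
Qed.

Lemma cardE_rows q : #|[set e | fracb q e]| = (\sum_i rdeg q i)%N.
Proof.
rewrite /rdeg pair_big -sum1_card big_mkcond /=; apply: eq_bigr => -[i y] _.
by rewrite inE /=; case: fracb.
Qed.

Lemma cardE_cols q : #|[set e | fracb q e]| = (\sum_y cdeg q y)%N.
Proof.
rewrite cardE_rows /rdeg /cdeg exchange_big //.
Qed.

Lemma kernel q e0 : feas q -> fracb q e0 ->
  exists v : I * T -> R, [/\ exists e, v e != 0,
     forall e, ~~ fracb q e -> v e = 0,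
     forall i, \sum_(y : T) v (i, y) = 0 &
     forall y, ~~ ntb q y -> \sum_(i : I) v (i, y) = 0].
Proof.
move=> Fq fe0; have [q0 q1 qc] := Fq.
have q01 i y : 0 <= q i y <= 1 by rewrite q0 feas_le1.
set E := [set e | fracb q e].
pose RC := [set i | rdeg q i != 0%N].
pose Cc0 := [set y | (cdeg q y != 0%N) && ~~ ntb q y].
have rdeg2 i : i \in RC -> (2 <= rdeg q i)%N.
  rewrite inE => /sum_bool_ex [y fy].
  have [y1 ne f1] := @one_frac _ (fun y => q i y) 1 y (fun y => q01 i y) (q1 i) fy.
  exact: (sum_bool_ge2 ne).
have cdeg2 y : y \in Cc0 -> (2 <= cdeg q y)%N.
  rewrite inE => /andP[/sum_bool_ex [i fi] nt].
  have [N cN] : exists N, colsum q y = N%:R.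
    move: nt (qc y); rewrite /ntb negb_and -!leNgt => /orP[h|h] /andP[h1 h2].
      by exists (lo y); apply/le_anti; rewrite h h1.
    by exists (hi y); apply/le_anti; rewrite h h2.
  have [i1 ne f1] := one_frac (fun i => q01 i y) cN fi.
  exact: (sum_bool_ge2 ne).
have hR : (2 * #|RC| <= #|E|)%N.
  apply: leq_trans (two_card_le rdeg2) _.
  rewrite cardE_rows big_mkcond /=; apply: leq_sum => i _.
  by case: ifP.
have hC (C : {set T}) y1 : C \subset Cc0 -> y1 \notin C -> (cdeg q y1 != 0)%N ->
    (#|RC| + #|C| < #|E|)%N.
  move=> sC nC c1.
  have h2 : (2 * #|C| + 1 <= #|E|)%N.
    rewrite cardE_cols; apply: leq_trans (sum_sub_le _ nC); apply: leq_add.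
      apply: two_card_le => y yC; apply: cdeg2; exact: (subsetP sC).
    by rewrite lt0n.
  by move: hR h2; lia.
have vzero (v : I * T -> R) i y : (forall e, e \notin E -> v e = 0) ->
    ~~ fracb q (i, y) -> v (i, y) = 0.
  by move=> H nf; apply: H; rewrite inE.
case: (boolP [exists y, (cdeg q y != 0%N) && ntb q y]).
  case/existsP => y1 /andP[c1 n1].
  have nC : y1 \notin Cc0 by rewrite inE n1 andbF.
  have [v [vnz vE vR vC]] := kernel_gen (hC Cc0 y1 (subxx _) nC c1).
  exists v; split => //.
  - by move=> e ne; apply: vE; rewrite inE.
  - move=> i; case: (boolP (i \in RC)) => [/vR //|].
    rewrite inE negbK /rdeg => /eqP /(congr1 (fun n => n == 0%N)); rewrite eqxx.
    rewrite sum_nat_eq0 => /forallP H; rewrite big1 // => y _.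
    by apply: vzero => //; move: (H y); rewrite implyTb; case: fracb.
  - move=> y nt; case: (boolP (cdeg q y != 0%N)) => [c|].
      by apply: vC; rewrite inE c nt.
    rewrite negbK /cdeg sum_nat_eq0 => /forallP H; rewrite big1 // => i _.
    by apply: vzero => //; move: (H i); rewrite implyTb; case: fracb.
move/existsPn => Hall.
pose y0 := e0.2.
have c0 : (cdeg q y0 != 0%N).
  by apply/negP => /eqP; rewrite /cdeg => /eqP; rewrite sum_nat_eq0 => /forallP /(_ e0.1); rewrite /y0 -surjective_pairing fe0.
have nC : y0 \notin Cc0 :\ y0 by rewrite !inE eqxx.
have [v [vnz vE vR vC]] := kernel_gen (hC (Cc0 :\ y0) y0 (subD1set _ _) nC c0).
have vR' i : \sum_(y : T) v (i, y) = 0.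
  case: (boolP (i \in RC)) => [/vR //|].
  rewrite inE negbK /rdeg sum_nat_eq0 => /forallP H; rewrite big1 // => y _.
  by apply: vzero => //; move: (H y); rewrite implyTb; case: fracb.
have vC' y : y != y0 -> \sum_(i : I) v (i, y) = 0.
  move=> ne; case: (boolP (cdeg q y != 0%N)) => [c|].
    apply: vC; rewrite !inE ne c /=.
    by move: (Hall y); rewrite c.
  rewrite negbK /cdeg sum_nat_eq0 => /forallP H; rewrite big1 // => i _.
  by apply: vzero => //; move: (H i); rewrite implyTb; case: fracb.
exists v; split => //.
- by move=> e ne; apply: vE; rewrite inE.
move=> y nt; case: (eqVneq y y0) => [->|ne]; last exact: vC'.
have : \sum_(y : T) \sum_(i : I) v (i, y) = 0.
  by rewrite exchange_big big1 // => i _; exact: vR'.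
rewrite (bigD1 y0) //= [X in _ + X]big1 ?addr0 // => y' ne'; exact: vC'.
Qed.

Lemma move_step q (v : I * T -> R) : feas q ->
  (exists e, v e != 0) -> (forall e, ~~ fracb q e -> v e = 0) ->
  (forall i, \sum_(y : T) v (i, y) = 0) ->
  (forall y, ~~ ntb q y -> \sum_(i : I) v (i, y) = 0) ->
  \sum_(i : I) \sum_(y : T) v (i, y) * w i y <= 0 ->
  exists q', [/\ feas q', (meas q' < meas q)%N & cst q' <= cst q].
Proof.
move=> Fq [e1 ne1] vE vR vC vw; have [q0 q1 qc] := Fq.
pose D y := \sum_(i : I) v (i, y).
pose valid (x : (I * T) + T) := match x with
  | inl e => v e != 0 | inr y => ntb q y && (D y != 0) end.
pose bnd (x : (I * T) + T) := match x with
  | inl e => if 0 < v e then (1 - q e.1 e.2) / v e else q e.1 e.2 / (- v e)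
  | inr y => if 0 < D y then ((hi y)%:R - colsum q y) / D y
             else (colsum q y - (lo y)%:R) / (- D y) end.
have ve1 : valid (inl e1) by [].
have fracv e : v e != 0 -> fracb q e.
  by move=> nz; apply: contraR nz => nf; rewrite vE.
have negv (x : R) : x != 0 -> ~~ (0 < x) -> 0 < - x.
  by move=> nz; rewrite -leNgt oppr_gt0 lt_neqAle nz.
have bpos x : valid x -> 0 < bnd x.
  case: x => [e|y] /= vx.
    have /andP[qa qb] := fracv e vx.
    case: ifP => vp; first by rewrite divr_gt0 // subr_gt0.
    by rewrite divr_gt0 // negv // vp.
  case/andP: vx => /andP[la lb] Dn.
  case: ifP => vp; first by rewrite divr_gt0 // subr_gt0.
  by rewrite divr_gt0 ?subr_gt0 // negv // vp.
case: (arg_minP bnd ve1) => xm vxm minx.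
set eps := bnd xm.
have eps0 : 0 < eps by exact: bpos.
pose q' i y := q i y + eps * v (i, y).
have cs' y : colsum q' y = colsum q y + eps * D y.
  by rewrite /colsum /q' big_split /= mulr_sumr.
have ent i y : 0 <= q' i y.
  rewrite /q'; have [vp|vn|v0] := ltgtP (v (i, y)) 0; last first.
  - by rewrite v0 mulr0 addr0.
  - by rewrite addr_ge0 // mulr_ge0 // ltW.
  have := minx (inl (i, y)); rewrite /= lt_eqF // => /(_ isT).
  rewrite ltNge (ltW vp) /= ler_pdivlMr ?oppr_gt0 //.
  by rewrite mulrN -subr_ge0 opprK addrC.
have colb y : (lo y)%:R <= colsum q' y <= (hi y)%:R.
  rewrite cs'; have [Dz|Dnz] := eqVneq (D y) 0; first by rewrite Dz mulr0 addr0.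
  case: (boolP (ntb q y)) => nt; last by move: Dnz; rewrite /D (vC y nt) eqxx.
  have := minx (inr y); rewrite /= nt Dnz => /(_ isT).
  case/andP: (qc y) => la lb.
  case: ifP => Dp.
    rewrite ler_pdivlMr // => h; rewrite -lerBrDl h andbT.
    by rewrite (le_trans la) // lerDl mulr_ge0 // ?ltW.
  rewrite ler_pdivlMr ?negv ?Dp // -/eps mulrN => h.
  have Dle : D y <= 0 by rewrite leNgt Dp.
  have h2 : eps * D y <= 0 by rewrite mulr_ge0_le0 // ltW.
  apply/andP; split; lra.
have Fq' : feas q'.
  split => //.
  by move=> i; rewrite /q' big_split /= -mulr_sumr vR mulr0 addr0.
have sub1 : [set e | fracb q' e] \subset [set e | fracb q e].
  apply/subsetP => -[i y]; rewrite !inE.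
  have [v0|vnz] := eqVneq (v (i, y)) 0; last by move=> _; exact: fracv.
  by rewrite /fracb /q' /= v0 mulr0 addr0.
have sub2 : [set y | ntb q' y] \subset [set y | ntb q y].
  apply/subsetP => y; rewrite !inE.
  case: (boolP (ntb q y)) => // nt.
  have e : colsum q' y = colsum q y by rewrite cs' /D vC // mulr0 addr0.
  by move: nt; rewrite /ntb e => /negbTE ->.
exists q'; split => //; last first.
  rewrite /cst /q'.
  have -> : \sum_i \sum_y (q i y + eps * v (i, y)) * w i y =
      \sum_i \sum_y q i y * w i y + eps * \sum_i \sum_y v (i, y) * w i y.
    rewrite mulr_sumr -big_split /=; apply: eq_bigr => i _.
    rewrite mulr_sumr -big_split /=; apply: eq_bigr => y _.
    by rewrite mulrDl mulrA.
  by rewrite gerDl pmulr_rle0.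
rewrite /meas.
case Exm : xm vxm => [e|y] /= vx.
  have pr : [set e | fracb q' e] \proper [set e | fracb q e].
    apply/properP; split => //; exists e; rewrite inE; first exact: fracv.
    rewrite /fracb /q' /eps Exm /= -surjective_pairing; case: ifP => vp.
      by rewrite mulfVK // addrC subrK ltxx andbF.
    by rewrite invrN mulrN mulNr mulfVK // subrr ltxx.
  by rewrite -addSn; apply: leq_add; [exact: proper_card | exact: subset_leq_card].
case/andP: vx => nt Dnz.
have pr : [set y | ntb q' y] \proper [set y | ntb q y].
  apply/properP; split => //; exists y; rewrite inE //.
  rewrite /ntb cs' /eps Exm /=; case: ifP => Dp.
    by rewrite mulfVK // addrC subrK ltxx andbF.
  by rewrite invrN mulrN mulNr mulfVK // opprB addrC subrK ltxx.
by rewrite -addnS; apply: leq_add; [exact: subset_leq_card | exact: proper_card].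
Qed.

Lemma round q : feas q ->
  exists f : I -> T, (forall y, lo y <= cnt f y <= hi y)%N /\
     \sum_(i : I) w i (f i) <= cst q.
Proof.
have [n] := ubnP (meas q); elim: n q => [//|n IH] q lt Fq.
case: (boolP [exists e, fracb q e]) => [/existsP[e0 fe0]|/existsPn nf]; last first.
  exact: base.
have [v [vnz vE vR vC]] := kernel Fq fe0.
have [q' [Fq' mlt cle]] : exists q', [/\ feas q', (meas q' < meas q)%N & cst q' <= cst q].
  case: (lerP (\sum_i \sum_y v (i, y) * w i y) 0) => hs.
    exact: move_step Fq vnz vE vR vC hs.
  apply: (@move_step _ (fun e => - v e)) => //.
  - by case: vnz => e ne; exists e; rewrite oppr_eq0.
  - by move=> e ne; rewrite vE ?oppr0.
  - by move=> i; rewrite sumrN vR oppr0.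
  - by move=> y nt; rewrite sumrN vC ?oppr0.
  rewrite (eq_bigr (fun i => - \sum_y v (i, y) * w i y)); last first.
    by move=> i _; rewrite -sumrN; apply: eq_bigr => y _; rewrite mulNr.
  by rewrite sumrN oppr_le0 ltW.
have [f [cf wf]] := IH q' (leq_trans mlt lt) Fq'.
by exists f; split => //; exact: le_trans wf cle.
Qed.

End Round.

Section Main.
Variables (R : realType) (T : finType).

Lemma sum_prod_tuple k (g : 'I_k -> T -> R) :
  \sum_(X : k.-tuple T) \prod_(i < k) g i (tnth X i) =
  \prod_(i < k) \sum_(x : T) g i x.
Proof.
rewrite bigA_distr_bigA (reindex (fun X : k.-tuple T => [ffun i => tnth X i])) /=.
  by apply: eq_bigr => X _; apply: eq_bigr => i _; rewrite ffunE.
exists (fun f : {ffun 'I_k -> T} => [tuple f i | i < k]) => [X _|f _].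
  by apply: eq_from_tnth => i; rewrite tnth_mktuple ffunE.
by apply/ffunP => i; rewrite ffunE tnth_mktuple.
Qed.

Lemma sum_eq1 (a : T) (g : T -> R) : \sum_(y : T) (a == y)%:R * g y = g a.
Proof.
rewrite (bigD1 a) //= eqxx mul1r big1 ?addr0 // => y ne.
by rewrite eq_sym (negbTE ne) mul0r.
Qed.

Lemma bigmin_le (J : finType) (F : J -> R) seed j :
  \big[Order.min/seed]_(i : J) F i <= F j.
Proof.
have : j \in index_enum J by rewrite mem_index_enum.
elim: (index_enum J) => // a r IHr; rewrite inE big_cons /= => /orP[/eqP<-|jr].
  by rewrite ge_min lexx.
by rewrite ge_min IHr ?orbT.
Qed.

Lemma bigmin_att (J : finType) (F : J -> R) seed :
  (exists j, seed = F j) -> exists j, \big[Order.min/seed]_(i : J) F i = F j.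
Proof.
move=> hs; elim: (index_enum J) => [|a r [j IH]]; first by rewrite big_nil.
rewrite big_cons /= IH minEle; case: ifP => _; first by exists a.
by exists j.
Qed.

Variables (d : T -> T -> R) (k : nat).

Lemma dk_le (U V : k.-tuple T) (s : 'S_k) :
  dk d U V <= \sum_(i < k) d (tnth U i) (tnth V (s i)).
Proof. exact: bigmin_le. Qed.

Lemma dk_att (U V : k.-tuple T) : exists s : 'S_k,
  dk d U V = \sum_(i < k) d (tnth U i) (tnth V (s i)).
Proof.
apply: bigmin_att; exists (1%g : 'S_k); apply: eq_bigr => i _; by rewrite perm1.
Qed.

End Main.

Section Main2.
Variables (R : realType) (T : finType) (d : T -> T -> R) (P : T -> R).
Variables (k : nat) (O : k.-tuple T).
Hypotheses (hd : is_metric d) (hP : is_distr P) (hk : (1 <= k)%N).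

Let pX (X : k.-tuple T) := \prod_(i < k) P (tnth X i).

Lemma pX_ge0 X : 0 <= pX X.
Proof. by apply: prodr_ge0 => i _; case: hP. Qed.

Lemma sum_pX : \sum_X pX X = 1.
Proof.
rewrite /pX (sum_prod_tuple (fun _ => P)); case: hP => _ ->; by rewrite big1.
Qed.

Lemma marg j y : \sum_X pX X * (tnth X j == y)%:R = P y.
Proof.
pose g (i : 'I_k) x := P x * (if i == j then (x == y)%:R else 1).
have -> : \sum_X pX X * (tnth X j == y)%:R = \sum_X \prod_(i < k) g i (tnth X i).
  apply: eq_bigr => X _; rewrite /g big_split /= /pX; congr (_ * _).
  rewrite [RHS](bigD1 j) //= ?eqxx [X in _ = _ * X]big1 ?mulr1 // => i ne.
  by rewrite (negbTE ne).
rewrite (sum_prod_tuple g) (bigD1 j) //= [X in _ * X]big1 ?mulr1.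
  rewrite /g /= ?eqxx.
  under eq_bigr => x _ do rewrite mulrC eq_sym.
  exact: sum_eq1.
move=> i ne; rewrite /g (negbTE ne); under eq_bigr => x _ do rewrite mulr1.
by case: hP.
Qed.

Let F (X : k.-tuple T) (s : 'S_k) := \sum_(i < k) d (tnth O i) (tnth X (s i)).
Let sig X := odflt 1%g [pick s : 'S_k | dk d O X == F X s].

Lemma sigE X : dk d O X = F X (sig X).
Proof.
rewrite /sig; case: pickP => [s /eqP //|H]; exfalso.
have [s hs] := dk_att d O X; by move: (H s); rewrite /F -hs eqxx.
Qed.

Let q (i : 'I_k) y := \sum_X pX X * (tnth X (sig X i) == y)%:R.

Lemma q_ge0 i y : 0 <= q i y.
Proof. by apply: sumr_ge0 => X _; rewrite mulr_ge0 ?pX_ge0. Qed.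

Lemma q_row i : \sum_y q i y = 1.
Proof.
rewrite /q exchange_big /= -[RHS]sum_pX; apply: eq_bigr => X _.
rewrite -mulr_sumr -[RHS]mulr1; congr (_ * _).
rewrite (eq_bigr (fun y => (tnth X (sig X i) == y)%:R * 1)) => [|y _].
  exact: sum_eq1.
by rewrite mulr1.
Qed.

Lemma q_col y : colsum q y = P y * k%:R.
Proof.
rewrite /colsum /q exchange_big /=.
have -> : \sum_X \sum_i pX X * (tnth X (sig X i) == y)%:R =
          \sum_X \sum_(j < k) pX X * (tnth X j == y)%:R.
  apply: eq_bigr => X _.
  by rewrite [RHS](reindex_inj (@perm_inj _ (sig X))).
rewrite exchange_big /=; under eq_bigr => j _ do rewrite marg.
by rewrite sumr_const card_ord mulr_natr.
Qed.

Lemma q_cost : cst (fun i y => d (tnth O i) y) q = kRP_cost d P O.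
Proof.
rewrite /cst /q /kRP_cost.
under eq_bigr => i _ do under eq_bigr => y _ do rewrite mulr_suml.
under eq_bigr => i _ do rewrite exchange_big /=.
rewrite exchange_big /=; apply: eq_bigr => X _.
rewrite sigE /F mulr_sumr; apply: eq_bigr => i _.
under eq_bigr => y _ do rewrite -mulrA.
by rewrite -mulr_sumr sum_eq1.
Qed.

Definition loF y := fl P k y.
Definition hiF y := if (fl P k y)%:R == P y * k%:R then fl P k y else (fl P k y).+1.

Lemma exists_f : exists f : 'I_k -> T,
  (forall y, loF y <= cnt f y <= hiF y)%N /\
  \sum_(i < k) d (tnth O i) (f i) <= kRP_cost d P O.
Proof.
have Fq : feas loF hiF q.
  split; [exact: q_ge0 | exact: q_row | move=> y].
  rewrite q_col /loF /hiF /fl.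
  have Pk0 : 0 <= P y * k%:R by rewrite mulr_ge0 //; case: hP.
  have /andP[t1 t2] := truncn_itv Pk0.
  rewrite t1 /=; case: eqP => [->//|_].
  exact: ltW.
have [f [cf wf]] := round (fun i y => d (tnth O i) y) Fq.
by exists f; split => //; rewrite -q_cost.
Qed.

Lemma cost_ge0 : 0 <= kRP_cost d P O.
Proof.
apply: sumr_ge0 => X _; rewrite mulr_ge0 ?pX_ge0 //.
rewrite sigE /F; apply: sumr_ge0 => i _; by case: hd.
Qed.

Lemma cost_bound (f : 'I_k -> T) :
  kRP_cost d P [tuple f i | i < k] <=
  \sum_(i < k) d (tnth O i) (f i) + kRP_cost d P O.
Proof.
case: hd => d0 _ dsym dtri.
rewrite /kRP_cost.
have -> : \sum_(i < k) d (tnth O i) (f i) =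
   \sum_X pX X * \sum_(i < k) d (tnth O i) (f i).
  by rewrite -mulr_suml sum_pX mul1r.
rewrite -big_split /=; apply: ler_sum => X _.
rewrite -mulrDr; apply: ler_wpM2l; first exact: pX_ge0.
apply: le_trans (dk_le d _ X (sig X)) _.
rewrite sigE /F -big_split /=; apply: ler_sum => i _.
rewrite tnth_mktuple (dsym (tnth O i)); exact: dtri.
Qed.

End Main2.

Section Final.
Variables (R : realType) (T : finType).

Lemma cnt_tuple k (f : 'I_k -> T) x :
  count_mem x [tuple f i | i < k] = cnt f x.
Proof. by rewrite /= count_map -sumn_count sumnE big_map big_enum /=. Qed.

Lemma cnt_flat (g : T -> nat) x :
  count_mem x (flatten [seq nseq (g y) y | y <- enum T]) = g x.
Proof.
rewrite count_flatten sumnE !big_map -enumT big_enum /=.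
rewrite (bigD1 x) //= count_nseq /= eqxx mul1n big1 ?addn0 // => y ne.
by rewrite count_nseq /= (negbTE ne).
Qed.

Lemma size_flat (g : T -> nat) :
  size (flatten [seq nseq (g y) y | y <- enum T]) = (\sum_y g y)%N.
Proof.
rewrite size_flatten sumnE /shape !big_map -enumT big_enum /=.
by apply: eq_bigr => y _; rewrite size_nseq.
Qed.

Lemma sum_cnt k (f : 'I_k -> T) : (\sum_y cnt f y)%N = k.
Proof.
rewrite /cnt exchange_big /= -[RHS]card_ord -sum1_card.
apply: eq_bigr => i _; rewrite (bigD1 (f i)) //= eqxx big1 ?addn0 // => y ne.
by rewrite eq_sym (negbTE ne).
Qed.

Variables (P : T -> R) (k : nat).
Hypotheses (hP : is_distr P) (hk : (1 <= k)%N).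

Lemma resid_ge0 x : 0 <= resid P k x.
Proof.
rewrite /resid subr_ge0 ler_pdivrMr ?ltr0n //.
by rewrite /fl truncn_le mulr_ge0 //; case: hP.
Qed.

Lemma resid_gt0 x : (fl P k x)%:R != P x * k%:R -> 0 < resid P k x.
Proof.
move=> ne; rewrite /resid subr_gt0 ltr_pdivrMr ?ltr0n // lt_neqAle ne /=.
by rewrite /fl truncn_le mulr_ge0 //; case: hP.
Qed.

Lemma resid_prob_ge0 x : 0 <= resid_prob P k x.
Proof.
by rewrite /resid_prob divr_ge0 ?resid_ge0 //; apply: sumr_ge0 => y _; exact: resid_ge0.
Qed.

Lemma resid_prob_gt0 x : (fl P k x)%:R != P x * k%:R -> 0 < resid_prob P k x.
Proof.
move=> ne; have rx := resid_gt0 ne.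
rewrite /resid_prob divr_gt0 //.
rewrite (bigD1 x) //=; apply: ltr_wpDr rx.
by apply: sumr_ge0 => y _; exact: resid_ge0.
Qed.

Lemma ptilde_pos (f : 'I_k -> T) :
  (forall y, loF P k y <= cnt f y <= hiF P k y)%N ->
  0 < Ptilde P [tuple f i | i < k].
Proof.
move=> cf.
have lc y : (fl P k y <= cnt f y)%N by case/andP: (cf y).
pose g y := (cnt f y - fl P k y)%N.
pose e := flatten [seq nseq (g y) y | y <- enum T].
have fixE : fixed_part P k = flatten [seq nseq (fl P k y) y | y <- enum T] by [].
have se : size e == rem_count P k.
  rewrite /e size_flat /rem_count fixE size_flat.
  have sc := sum_cnt f; apply/eqP.
  have : (\sum_y g y + \sum_y fl P k y = \sum_y cnt f y)%N.
    by rewrite -big_split /=; apply: eq_bigr => y _; rewrite subnK.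
  lia.
pose et := @Tuple _ _ e se.
have pe : perm_eq (fixed_part P k ++ et) [tuple f i | i < k].
  apply/allP => x _ /=; rewrite count_cat fixE cnt_flat cnt_flat cnt_tuple.
  by rewrite /g subnKC.
have termpos : 0 < (\prod_(j < rem_count P k) resid_prob P k (tnth et j)) *
                   (perm_eq (fixed_part P k ++ et) [tuple f i | i < k])%:R.
  rewrite pe mulr1; apply: prodr_gt0 => j _.
  apply: resid_prob_gt0.
  have : (0 < count_mem (tnth et j) e)%N by rewrite -has_count has_pred1 mem_tnth.
  rewrite cnt_flat /g subn_gt0 => lt.
  have := cf (tnth et j); rewrite /hiF; case: eqP => // _.
  by move=> /andP[_]; rewrite leqNgt lt.
rewrite /Ptilde (bigD1 et) //=.
apply: ltr_wpDr termpos.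
apply: sumr_ge0 => e' _; apply: mulr_ge0; last by case: perm_eq.
by apply: prodr_ge0 => j _; exact: resid_prob_ge0.
Qed.

End Final.

Theorem corollary2 (R : realType) (T : finType) (d : T -> T -> R) (P : T -> R)
    (k : nat) (O : k.-tuple T) :
  is_metric d -> is_distr P -> (1 <= k)%N ->
  (forall S : k.-tuple T, kRP_cost d P O <= kRP_cost d P S) ->
  exists S : k.-tuple T,
    0 < Ptilde P S /\ kRP_cost d P S <= 4 * kRP_cost d P O.
Proof.
move=> hd hP hk _.
have [f [cf wf]] := exists_f d O hP.
exists [tuple f i | i < k]; split; first by move: (ptilde_pos hP hk cf).
apply: le_trans (cost_bound O hd hP f) _.
have c0 := cost_ge0 O hd hP.
lra.
Qed.
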